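(* Let $\mathcal{V}$ be a variety of algebras, $\mathcal{C}$ a full subcategory of the category of finitely generated free $\mathcal{V}$-algebras containing the free monogenic algebra $A_0$ on $x_0$, and $\Phi$ an automorphism of $\mathcal{C}$. Let $w^\Phi(x_0)=\eta^\Phi_0(\eta^{\Phi^{-1}}(x_0))\in A_0$, and let $c^\Phi_A=s^{\Phi^{-1}}_{\Phi(A)}\circ s^\Phi_A:|A|\to|A|$. Then for every $\mathcal{C}$-algebra $A$ and every $a\in A$ we have $c^\Phi_A(a)=w^\Phi(a)$; in particular $c^\Phi_A(a)$ lies in the subalgebra of $A$ generated by $a$. If $w^\Phi(x_0)=x_0$, then all maps $c^\Phi_A$ are identity maps and $\Phi$ is potentially inner.
   Context: Objects of $\mathcal{C}$ are free $\mathcal{V}$-algebras on finite sets, morphisms are all homomorphisms; $|A|$ is the underlying set. For $a\in A$, $\alpha^A_a:A_0\to A$ is the homomorphism with $x_0\mapsto a$; for an element $w(x_0)\in A_0$ (a term in $x_0$), $w(a):=\alpha^A_a(w(x_0))$. For an automorphism $\Psi\in\{\Phi,\Phi^{-1}\}$: $\eta^\Psi_0:\Psi^{-1}(A_0)\to A_0$ is the homomorphism sending every element of a fixed basis of $\Psi^{-1}(A_0)$ to $x_0$ (the identity if $\Psi(A_0)=A_0$), $\eta^\Psi=\Psi(\eta^\Psi_0):A_0\to\Psi(A_0)$, and the main function is $s^\Psi_A:|A|\to|\Psi(A)|$, $s^\Psi_A(a)=\Psi(\alpha^A_a)(\eta^\Psi(x_0))$. $\Phi$ is potentially inner if there are bijections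 $s_A:|A|\to|\Phi(A)|$ with $\Phi(\mu)\circ s_A=s_B\circ\mu$ for all homomorphisms $\mu:A\to B$ in $\mathcal{C}$. *)

(* Defs.v *)
From mathcomp Require Import all_boot.

Set Implicit Arguments.
Unset Strict Implicit.
Unset Printing Implicit Defensive.

Section Variety.

Variable ops : Type.
Variable ar : ops -> nat.

Record alg := Alg {
  carrier :> Type;
  op_of : forall o : ops, ('I_(ar o) -> carrier) -> carrier }.

Definition is_hom (A B : alg) (f : A -> B) : Prop :=
  forall (o : ops) (args : 'I_(ar o) -> A),
    f (@op_of A o args) = @op_of B o (fun i => f (args i)).

Inductive term (X : Type) : Type :=
| Var : X -> term X
| App : forall o : ops, ('I_(ar o) -> term X) -> term X.

Fixpoint eval (A : alg) (X : Type) (v : X -> A) (t : term X) : A :=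
  match t with
  | Var x => v x
  | App o args => @op_of A o (fun i => eval v (args i))
  end.

(* The variety V: the class of algebras satisfying a set E of identities. *)
Variable E : term nat -> term nat -> Prop.

Definition in_variety (A : alg) : Prop :=
  forall l r, E l r -> forall v : nat -> A, eval v l = eval v r.

Record freeAlg := FreeAlg {
  fa :> alg;
  fa_n : nat;
  fa_basis : 'I_fa_n -> fa;
  fa_in : in_variety fa;
  fa_lift : forall B : alg, ('I_fa_n -> B) -> fa -> B;
  fa_lift_hom : forall B : alg, in_variety B ->
      forall g : 'I_fa_n -> B, is_hom (fa_lift g);
  fa_lift_basis : forall B : alg, in_variety B ->
      forall (g : 'I_fa_n -> B) i, fa_lift g (fa_basis i) = g i;
  fa_lift_uniq : forall B : alg, in_variety B ->
      forall (g : 'I_fa_n -> B) (h : fa -> B), is_hom h ->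
      (forall i, h (fa_basis i) = g i) -> forall x, h x = fa_lift g x }.

(* The full subcategory C: a class of free V-algebras; morphisms are all
   homomorphisms. *)
Variable inC : freeAlg -> Prop.

Definition Obj := {A : freeAlg | inC A}.
Definition car (A : Obj) : Type := carrier (fa (sval A)).
Definition hom (A B : Obj) (f : car A -> car B) : Prop :=
  @is_hom (fa (sval A)) (fa (sval B)) f.

Definition castc (A A' : Obj) (e : A = A') (x : car A) : car A' :=
  eq_rect A car x A' e.

(* An automorphism of C: a functor (Fo, Fm) with a strict inverse functor
   (Go, Gm).  Functors act on morphisms (= homomorphisms); the action on
   non-homomorphic functions is irrelevant. *)
Record catAut := CatAut {
  Fo : Obj -> Obj;
  Fm : forall A B : Obj, (car A -> car B) -> car (Fo A) -> car (Fo B);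
  Go : Obj -> Obj;
  Gm : forall A B : Obj, (car A -> car B) -> car (Go A) -> car (Go B);
  Fm_hom : forall A B f, hom f -> hom (@Fm A B f);
  Fm_id : forall A x, @Fm A A (fun y => y) x = x;
  Fm_comp : forall A B C (f : car A -> car B) (g : car B -> car C),
      hom f -> hom g -> forall x, Fm (fun y => g (f y)) x = Fm g (Fm f x);
  Gm_hom : forall A B f, hom f -> hom (@Gm A B f);
  Gm_id : forall A x, @Gm A A (fun y => y) x = x;
  Gm_comp : forall A B C (f : car A -> car B) (g : car B -> car C),
      hom f -> hom g -> forall x, Gm (fun y => g (f y)) x = Gm g (Gm f x);
  GF_o : forall A, Go (Fo A) = A;
  FG_o : forall A, Fo (Go A) = A;
  GF_m : forall A B (f : car A -> car B), hom f ->
      forall x, castc (GF_o B) (Gm (Fm f) x) = f (castc (GF_o A) x);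
  FG_m : forall A B (f : car A -> car B), hom f ->
      forall x, castc (FG_o B) (Fm (Gm f) x) = f (castc (FG_o A) x) }.

Arguments Fm c {A B} _ _.
Arguments Gm c {A B} _ _.

Unset Implicit Arguments.

Definition inv (F : catAut) : catAut :=
  @CatAut (Go F) (@Gm F) (Fo F) (@Fm F)
    (@Gm_hom F) (@Gm_id F) (@Gm_comp F)
    (@Fm_hom F) (@Fm_id F) (@Fm_comp F)
    (FG_o F) (GF_o F) (@FG_m F) (@GF_m F).

(* The free monogenic algebra A0 in C on x0 (x0 its fixed basis element). *)
Variable A0 : Obj.
Variable x0 : car A0.

Definition alpha (A : Obj) (a : car A) : car A0 -> car A :=
  @fa_lift (sval A0) (fa (sval A)) (fun _ => a).

Definition eta0 (F : catAut) : car (Go F A0) -> car A0 :=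
  @fa_lift (sval (Go F A0)) (fa (sval A0)) (fun _ => x0).

(* eta^Psi = Psi(eta^Psi_0) : A0 = Psi(Psi^{-1}(A0)) -> Psi(A0) *)
Definition eta (F : catAut) (x : car A0) : car (Fo F A0) :=
  @Fm F (Go F A0) A0 (eta0 F) (castc (esym (FG_o F A0)) x).

Definition smain (F : catAut) (A : Obj) (a : car A) : car (Fo F A) :=
  @Fm F A0 A (alpha A a) (eta F x0).

Definition wPhi (F : catAut) : car A0 := eta0 F (eta (inv F) x0).

Definition cPhi (F : catAut) (A : Obj) (a : car A) : car A :=
  castc (GF_o F A) (smain (inv F) (Fo F A) (smain F A a)).

Definition potentially_inner (F : catAut) : Prop :=
  exists s : forall A : Obj, car A -> car (Fo F A),
    (forall A, bijective (s A)) /\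
    (forall A B (mu : car A -> car B), hom mu ->
       forall x, Fm F mu (s A x) = s B (mu x)).

End Variety.

Definition in_subalg (ops : Type) (ar : ops -> nat) (A : alg ar) (a b : A) : Prop :=
  forall P : A -> Prop, P a ->
    (forall o args, (forall i, P (args i)) -> P (@op_of ops ar A o args)) -> P b.

Arguments inv {ops ar E inC} F.
Arguments alpha {ops ar E inC} A0 A a _.
Arguments eta0 {ops ar E inC} A0 x0 F _.
Arguments eta {ops ar E inC} A0 x0 F x.
Arguments smain {ops ar E inC} A0 x0 F A a.
Arguments wPhi {ops ar E inC} A0 x0 F.
Arguments cPhi {ops ar E inC} A0 x0 F A a.
Arguments potentially_inner {ops ar E inC} F.
Arguments in_subalg {ops ar} A a b.

(* Main.v *)
Require Import Defs.
From mathcomp Require Import all_boot.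
From Stdlib Require Import ProofIrrelevance FunctionalExtensionality.


Arguments Fm {ops ar E inC} c {A B} _ _.
Arguments Gm {ops ar E inC} c {A B} _ _.

Section Proofs.
Variables (ops : Type) (ar : ops -> nat) (E : term ar nat -> term ar nat -> Prop)
  (inC : freeAlg E -> Prop) (A0 : Obj inC) (x0 : car A0)
  (hA0n : fa_n (sval A0) = 1)
  (hA0b : forall i : 'I_(fa_n (sval A0)), fa_basis i = x0).

Lemma castc_pi {X Y : Obj inC} (e1 e2 : X = Y) (x : car X) : castc e1 x = castc e2 x.
Proof. by rewrite (proof_irrelevance _ e1 e2). Qed.

Lemma castc_trans {X Y Z : Obj inC} (e1 : X = Y) (e2 : Y = Z) (x : car X) :
  castc e2 (castc e1 x) = castc (etrans e1 e2) x.
Proof. by destruct e1, e2. Qed.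

Lemma castc_id {X : Obj inC} (e : X = X) (x : car X) : castc e x = x.
Proof. by rewrite (castc_pi e erefl). Qed.

Lemma castcK {X Y : Obj inC} (e : X = Y) (x : car X) : castc (esym e) (castc e x) = x.
Proof. by destruct e. Qed.

Lemma castcKV {X Y : Obj inC} (e : X = Y) (x : car Y) : castc e (castc (esym e) x) = x.
Proof. by destruct e. Qed.

Lemma hom_cast {X Y : Obj inC} (e : X = Y) : hom (castc e).
Proof. by destruct e. Qed.

Lemma hom_comp {X Y Z : Obj inC} {f : car X -> car Y} {g : car Y -> car Z} :
  hom f -> hom g -> hom (fun x => g (f x)).
Proof. move=> hf hg o args; rewrite /= hf hg //. Qed.

Lemma hom_id (X : Obj inC) : hom (fun x : car X => x).
Proof. by []. Qed.

Lemma Fm_cast (F : catAut inC) {X Y : Obj inC} (e : X = Y) (x : car (Fo F X)) :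
  Fm F (castc e) x = castc (f_equal (Fo F) e) x.
Proof. destruct e. exact (Fm_id x). Qed.

Lemma Gm_cast (F : catAut inC) {X Y : Obj inC} (e : X = Y) (x : car (Go F X)) :
  Gm F (castc e) x = castc (f_equal (Go F) e) x.
Proof. destruct e. exact (Gm_id x). Qed.

Lemma inV (X : Obj inC) : in_variety E (fa (sval X)).
Proof. exact: fa_in. Qed.

Lemma uniq0 {B : Obj inC} {h1 h2 : car A0 -> car B} :
  hom h1 -> hom h2 -> h1 x0 = h2 x0 -> forall x, h1 x = h2 x.
Proof.
move=> H1 H2 e x.
rewrite (fa_lift_uniq (inV B) (g := fun _ => h1 x0) H1) //; last first.
  by move=> i; rewrite hA0b.
rewrite (fa_lift_uniq (inV B) (g := fun _ => h1 x0) H2) //.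
by move=> i; rewrite hA0b.
Qed.

Lemma alpha_hom {A : Obj inC} (a : car A) : hom (alpha A0 A a).
Proof. exact: (fa_lift_hom (inV A)). Qed.

Lemma alpha_x0 {A : Obj inC} (a : car A) : alpha A0 A a x0 = a.
Proof.
have i : 'I_(fa_n (sval A0)) by rewrite hA0n; exact ord0.
rewrite -(hA0b i) /alpha (fa_lift_basis (inV A)) //.
Qed.

Lemma alpha_comp {A B : Obj inC} {mu : car A -> car B} (a : car A) :
  hom mu -> forall x, alpha A0 B (mu a) x = mu (alpha A0 A a x).
Proof.
move=> hmu; apply: uniq0; first exact: alpha_hom.
  apply: hom_comp => //; exact: alpha_hom.
by rewrite !alpha_x0.
Qed.

Lemma eta0_hom (F : catAut inC) : hom (eta0 A0 x0 F).
Proof. exact: (fa_lift_hom (inV A0)). Qed.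

Lemma eta_hom (F : catAut inC) : hom (eta A0 x0 F).
Proof.
apply: (hom_comp (hom_cast _)); apply: Fm_hom; exact: eta0_hom.
Qed.

Lemma part1 (F : catAut inC) {A : Obj inC} (a : car A) :
  cPhi A0 x0 F A a = alpha A0 A a (wPhi A0 x0 F).
Proof.
rewrite /cPhi /smain /=.
set b := Fm F (alpha A0 A a) (eta A0 x0 F x0).
have Hb : alpha A0 (Fo F A) b = fun y => Fm F (alpha A0 A a) (eta A0 x0 F y).
  apply: functional_extensionality; apply: uniq0.
  - exact: alpha_hom.
  - apply: hom_comp; [exact: eta_hom | apply: Fm_hom; exact: alpha_hom].
  - by rewrite alpha_x0.
rewrite Hb (Gm_comp (eta_hom F) (Fm_hom (alpha_hom a))).
rewrite (GF_m (alpha_hom a)); congr (alpha A0 A a _).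
rewrite /eta /=.
rewrite (Gm_comp (hom_cast _) (Fm_hom (eta0_hom F))).
rewrite (GF_m (eta0_hom F)) Gm_cast castc_trans castc_id.
by [].
Qed.

Section Sub.
Variable (A : Obj inC) (a : car A).
Definition Sc := {y : car A | in_subalg (fa (sval A)) a y}.
Definition Sop (o : ops) (args : 'I_(ar o) -> Sc) : Sc.
Proof.
exists (@op_of _ _ (fa (sval A)) o (fun i => sval (args i))).
move=> P Pa Hc; apply: (Hc) => i; exact: (proj2_sig (args i) P Pa Hc).
Defined.
Definition Salg : alg ar := @Alg ops ar Sc Sop.

Lemma Sc_eq {u v : Sc} : sval u = sval v -> u = v.
Proof.
case: u => u pu; case: v => v pv /= e; subst v; f_equal; apply: proof_irrelevance.
Qed.

Lemma eval_S (v : nat -> Salg) (t : term ar nat) :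
  sval (eval v t) = eval (A := fa (sval A)) (fun n => sval (v n)) t.
Proof.
elim: t => [n|o args IH] //=.
congr (op_of _); apply: functional_extensionality => i; exact: IH.
Qed.

Lemma Salg_in : in_variety E Salg.
Proof.
move=> l r Elr v; apply: Sc_eq; rewrite !eval_S; exact: (inV A).
Qed.

Lemma in_sub_alpha (t : car A0) : in_subalg (fa (sval A)) a (alpha A0 A a t).
Proof.
have pa : in_subalg (fa (sval A)) a a by move=> P Pa _.
pose h := @fa_lift _ _ _ (sval A0) Salg (fun _ => exist _ a pa).
have hh : is_hom h := fa_lift_hom Salg_in _.
have : alpha A0 A a t = sval (h t).
  apply: (uniq0 (h2 := fun x => sval (h x))).
  - exact: alpha_hom.
  - move=> o args /=; by rewrite hh.
  - rewrite alpha_x0.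
    have i : 'I_(fa_n (sval A0)) by rewrite hA0n; exact ord0.
    by rewrite -(hA0b i) /h (fa_lift_basis Salg_in).
move=> ->; exact: (proj2_sig (h t)).
Qed.
End Sub.

Lemma W' (F : catAut inC) : wPhi A0 x0 F = x0 -> wPhi A0 x0 (Defs.inv F) = x0.
Proof.
move=> Hw.
set f := eta0 A0 x0 F.
set g := eta0 A0 x0 (Defs.inv F).
have hf : hom f := eta0_hom F.
have hg : hom g := eta0_hom (Defs.inv F).
have hGg : hom (Gm F g) := Gm_hom hg.
have K : forall x, f (Gm F g (castc (esym (GF_o F A0)) x)) = x.
  apply: (uniq0 (h2 := fun x => x)).
  - exact: (hom_comp (hom_comp (hom_cast _) hGg) hf).
  - exact: hom_id.
  - exact: Hw.
have S2 : forall y, eta A0 x0 F (g y) = y.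
  move=> y.
  have Kf : (fun x => f (Gm F g (castc (esym (GF_o F A0)) x))) = (fun x => x).
    exact: functional_extensionality.
  have := Fm_id (c := F) y.
  rewrite -Kf.
  rewrite (Fm_comp (hom_comp (hom_cast _) hGg) hf).
  rewrite (Fm_comp (hom_cast _) hGg) Fm_cast.
  have FG := FG_m (c := F) hg.
  set u := castc _ y.
  have -> : Fm F (Gm F g) u = castc (esym (FG_o F A0)) (g (castc (FG_o F (Fo F A0)) u)).
    by rewrite -FG castcK.
  by rewrite /u castc_trans castc_id.
have epi : forall h1 h2 : car A0 -> car A0, hom h1 -> hom h2 ->
    (forall y, h1 (g y) = h2 (g y)) -> h1 x0 = h2 x0.
  move=> h1 h2 H1 H2 Hy.
  case Hn: (fa_n (sval (Fo F A0))) => [|n].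
  - have E12 : forall u, Fm F h1 u = Fm F h2 u.
      move=> u.
      rewrite (fa_lift_uniq (inV _) (g := fun i => Fm F h1 (fa_basis i)) (Fm_hom H1)) //.
      rewrite (fa_lift_uniq (inV _) (g := fun i => Fm F h1 (fa_basis i)) (Fm_hom H2)) //.
      move=> i; exfalso; have Hi : (nat_of_ord i < fa_n (sval (Fo F A0)))%N := ltn_ord i; move: Hi; generalize (nat_of_ord i) => k; by rewrite Hn.
    have e1 := GF_m (c := F) H1 (castc (esym (GF_o F A0)) x0).
    have e2 := GF_m (c := F) H2 (castc (esym (GF_o F A0)) x0).
    rewrite castcKV in e1; rewrite castcKV in e2.
    rewrite -e1 -e2; congr (castc _ (Gm F _ _)).
    exact: functional_extensionality.
  - have i : 'I_(fa_n (sval (Fo F A0))) by rewrite Hn; exact ord0.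
    have gi : g (fa_basis i) = x0 by rewrite /g /eta0 (fa_lift_basis (inV A0)).
    by rewrite -gi Hy.
have := epi (fun x => g (eta A0 x0 F x)) (fun x => x)
  (hom_comp (eta_hom F) hg) (@hom_id A0).
rewrite /wPhi.
move=> H; apply: H => y; by rewrite S2.
Qed.

Lemma smain_cast (F : catAut inC) {X Y : Obj inC} (e : X = Y) (z : car X) :
  smain A0 x0 F Y (castc e z) = castc (f_equal (Fo F) e) (smain A0 x0 F X z).
Proof. by destruct e. Qed.

Lemma main_sec (Phi : catAut inC) :
  (forall (A : Obj inC) (a : car A),
      cPhi A0 x0 Phi A a = alpha A0 A a (wPhi A0 x0 Phi) /\
      in_subalg (fa (sval A)) a (cPhi A0 x0 Phi A a)) /\
  (wPhi A0 x0 Phi = x0 ->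
      (forall (A : Obj inC) (a : car A), cPhi A0 x0 Phi A a = a) /\
      potentially_inner Phi).
Proof.
split.
  move=> A a; rewrite (part1); split => //.
  exact: in_sub_alpha.
move=> Hw.
have C : forall (A : Obj inC) (a : car A), cPhi A0 x0 Phi A a = a.
  by move=> A a; rewrite (part1) Hw (alpha_x0).
split => //.
have Hw' := W' Phi Hw.
exists (smain A0 x0 Phi); split.
- move=> A.
  exists (fun y => castc (GF_o Phi A) (smain A0 x0 (Defs.inv Phi) (Fo Phi A) y)).
  + move=> x; exact: C.
  + move=> y.
    have := part1 (Defs.inv Phi) y.
    rewrite Hw' (alpha_x0) /cPhi /= => H.
    rewrite smain_cast -[RHS]H; apply: castc_pi.
- move=> A B mu hmu x.
  rewrite /smain.
  have -> : alpha A0 B (mu x) = fun y => mu (alpha A0 A x y).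
    apply: functional_extensionality; exact: (alpha_comp).
  by rewrite (Fm_comp (alpha_hom _) hmu).
Qed.

End Proofs.

Theorem proposition2
  (ops : Type) (ar : ops -> nat) (E : term ar nat -> term ar nat -> Prop)
  (inC : freeAlg E -> Prop) (A0 : Obj inC) (x0 : car A0)
  (hA0n : fa_n (sval A0) = 1)
  (hA0b : forall i : 'I_(fa_n (sval A0)), fa_basis i = x0)
  (Phi : catAut inC) :
  (forall (A : Obj inC) (a : car A),
      cPhi A0 x0 Phi A a = alpha A0 A a (wPhi A0 x0 Phi) /\
      in_subalg (fa (sval A)) a (cPhi A0 x0 Phi A a)) /\
  (wPhi A0 x0 Phi = x0 ->
      (forall (A : Obj inC) (a : car A), cPhi A0 x0 Phi A a = a) /\
      potentially_inner Phi).
Proof. exact: main_sec hA0n hA0b Phi. Qed.
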